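(* Let $K\subseteq\mathbb{R}^n$ be any closed convex cone and $c\in\mathbb{R}^n$ an arbitrary vector. Then the set $\{X\in\mathbb{S}^n_+:\ Xc\in K\}$ is rank-one generated.
   Context: $\mathbb{S}^n_+$ is the cone of real symmetric positive semidefinite $n\times n$ matrices. A closed convex cone $\mathcal{S}\subseteq\mathbb{S}^n_+$ is rank-one generated (ROG) if $\mathcal{S}=\mathrm{conv}(\mathcal{S}\cap\{xx^\top:x\in\mathbb{R}^n\})$. *)

(* Defs.v *)
(* The topology on 'cV[R]_n and 'M[R]_n is the product (entrywise) topology
   from matrix_topology.v. *)
From HB Require Import structures.
From mathcomp Require Import all_boot all_order all_algebra.
From mathcomp Require Import all_classical all_reals all_analysis.
Set Implicit Arguments. Unset Strict Implicit. Unset Printing Implicit Defensive.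
Import Order.TTheory GRing.Theory Num.Theory.
Import numFieldNormedType.Exports.
Local Open Scope classical_set_scope.
Local Open Scope ring_scope.

Definition convex_cone (R : realType) (m n : nat) (K : set 'M[R]_(m, n)) : Prop :=
  forall x y, K x -> K y -> forall a b : R, 0 <= a -> 0 <= b -> K (a *: x + b *: y).

Definition closed_convex_cone (R : realType) (m n : nat) (K : set 'M[R]_(m, n)) : Prop :=
  closed K /\ convex_cone K.

Definition psd (R : realType) (n : nat) : set 'M[R]_n :=
  [set X | X^T = X /\ forall x : 'cV[R]_n, 0 <= (x^T *m X *m x) 0 0].

Definition rank_one_set (R : realType) (n : nat) : set 'M[R]_n :=
  [set X | exists x : 'cV[R]_n, X = x *m x^T].

Definition conv (R : realType) (n : nat) (A : set 'M[R]_n) : set 'M[R]_n :=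
  [set X | exists (k : nat) (lam : 'I_k -> R) (P : 'I_k -> 'M[R]_n),
     (forall i, 0 <= lam i) /\ \sum_(i < k) lam i = 1 /\
     (forall i, A (P i)) /\ X = \sum_(i < k) lam i *: P i].

Definition ROG (R : realType) (n : nat) (S : set 'M[R]_n) : Prop :=
  [/\ closed_convex_cone S, S `<=` @psd R n & S = @conv R n (S `&` @rank_one_set R n)].

(* Main.v *)
Require Import Defs.
From HB Require Import structures.
From mathcomp Require Import all_boot all_order all_algebra.
From mathcomp Require Import all_classical all_reals all_analysis.
From mathcomp Require Import ring lra.
Set Implicit Arguments. Unset Strict Implicit. Unset Printing Implicit Defensive.
Import Order.TTheory GRing.Theory Num.Theory.
Import numFieldNormedType.Exports.
Local Open Scope classical_set_scope.
Local Open Scope ring_scope.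

Lemma sum_cont (T : topologicalType) (R : realType) k (g : 'I_k -> T -> R) :
  (forall i, continuous (g i)) -> continuous (fun x => \sum_(i < k) g i x).
Proof.
elim: k g => [|k IH] g gc.
  have -> : (fun x => \sum_(i < 0) g i x) = (fun=> 0).
    by apply/funext => x; rewrite big_ord0.
  exact: cst_continuous.
have -> : (fun x => \sum_(i < k.+1) g i x) =
   (fun x => \sum_(i < k) g (widen_ord (leqnSn k) i) x) + g ord_max.
  by apply/funext => x; rewrite big_ord_recr.
move=> x; apply: continuousD; last exact: gc.
by apply: (IH (fun i => g (widen_ord (leqnSn k) i))) => i; exact: gc.
Qed.

Lemma entry_cont (R : realType) m n p q (A : 'M[R]_(p, m)) (B : 'M[R]_(n, q)) i j :
  continuous (fun X : 'M[R]_(m, n) => (A *m X *m B) i j).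
Proof.
have -> : (fun X : 'M[R]_(m, n) => (A *m X *m B) i j) =
   (fun X => \sum_(l < n) (\sum_(k < m) (fun X : 'M[R]_(m, n) => A i k) X * X k l) * B l j).
  by apply/funext => X; rewrite mxE; apply: eq_bigr => l _; rewrite mxE.
apply: sum_cont => l x.
apply: (@continuousM _ _ (fun X : 'M[R]_(m, n) => \sum_(k < m) A i k * X k l) (fun=> B l j)); last exact: cst_continuous.
apply: sum_cont => k y.
apply: (@continuousM _ _ (fun=> A i k) (fun X : 'M[R]_(m, n) => X k l)).
  exact: cst_continuous.
exact: coord_continuous.
Qed.

Lemma mx_cont (T : topologicalType) (R : realType) p q (f : T -> 'M[R]_(p, q)) :
  (forall i j, continuous (fun x => f x i j)) -> continuous f.
Proof.
move=> fc x; apply/(@cvg_mx_entourageP _ p q (f @ x) _ (f x)) => A entA.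
have H : forall i j, \forall y \near x, (f x i j, f y i j) \in A.
  move=> i j; have := fc i j x; move/cvg_entourageP => /(_ A entA).
  move=> HA; near=> y; rewrite inE; near: y; exact: HA.
have := @filter_forall _ _ (fun i y => forall j, (f x i j, f y i j) \in A) (nbhs x) _
  (fun i => @filter_forall _ _ (fun j y => (f x i j, f y i j) \in A) (nbhs x) _ (H i)).
by move=> /(_ (nbhs_filter x) (nbhs_filter x)).
Unshelve. all: by end_near. Qed.

Section Alg.
Variables (R : realType) (n : nat).
Implicit Types (X Y : 'M[R]_n) (x y z w e v : 'cV[R]_n).

Definition dot x y := (x^T *m y) 0 0.
Definition Bf X x y := (x^T *m X *m y) 0 0.

Lemma dotC x y : dot x y = dot y x.
Proof.
rewrite /dot; have -> : x^T *m y = (y^T *m x)^T by rewrite trmx_mul trmxK.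
by rewrite mxE.
Qed.

Lemma B_dot X x y : Bf X x y = dot x (X *m y).
Proof. by rewrite /Bf /dot mulmxA. Qed.

Lemma dotE x y : dot x y = \sum_i x i 0 * y i 0.
Proof. by rewrite /dot mxE; apply: eq_bigr => i _; rewrite mxE. Qed.

Lemma dotDr x y z : dot x (y + z) = dot x y + dot x z.
Proof. by rewrite !dotE -big_split; apply: eq_bigr => i _; rewrite !mxE mulrDr. Qed.
Lemma dotZr a x y : dot x (a *: y) = a * dot x y.
Proof. by rewrite !dotE mulr_sumr; apply: eq_bigr => i _; rewrite !mxE mulrCA. Qed.
Lemma dotBr x y z : dot x (y - z) = dot x y - dot x z.
Proof. by rewrite !dotE -sumrB; apply: eq_bigr => i _; rewrite !mxE mulrBr. Qed.
Lemma dotDl x y z : dot (y + z) x = dot y x + dot z x.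
Proof. by rewrite !(dotC _ x) dotDr. Qed.
Lemma dotZl a x y : dot (a *: y) x = a * dot y x.
Proof. by rewrite !(dotC _ x) dotZr. Qed.

Lemma Bsym X x y : X^T = X -> Bf X x y = Bf X y x.
Proof.
move=> hX; rewrite !B_dot dotC /dot trmx_mul hX mulmxA //.
Qed.

Lemma BDl X x y z : Bf X (x + y) z = Bf X x z + Bf X y z.
Proof. by rewrite !B_dot dotDl. Qed.
Lemma BZl X a x z : Bf X (a *: x) z = a * Bf X x z.
Proof. by rewrite !B_dot dotZl. Qed.
Lemma BDr X x y z : Bf X z (x + y) = Bf X z x + Bf X z y.
Proof. by rewrite !B_dot mulmxDr dotDr. Qed.
Lemma BZr X a x z : Bf X z (a *: x) = a * Bf X z x.
Proof. by rewrite !B_dot -scalemxAr dotZr. Qed.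

Lemma BXlin X Y a b x y : Bf (a *: X + b *: Y) x y = a * Bf X x y + b * Bf Y x y.
Proof. by rewrite !B_dot mulmxDl -!scalemxAl dotDr !dotZr. Qed.
Lemma BXB X Y x y : Bf (X - Y) x y = Bf X x y - Bf Y x y.
Proof. by rewrite !B_dot mulmxBl dotBr. Qed.

Lemma rank1_apply v y : v *m v^T *m y = dot v y *: v.
Proof. by rewrite -mulmxA [v^T *m y]mx11_scalar mul_mx_scalar. Qed.

Lemma B_rank1 v x y : Bf (v *m v^T) x y = dot x v * dot v y.
Proof. by rewrite B_dot rank1_apply dotZr mulrC. Qed.

Lemma Bexp X x e t : X^T = X ->
  Bf X (x + t *: e) (x + t *: e) = Bf X x x + 2 * t * Bf X x e + t ^+ 2 * Bf X e e.
Proof.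
move=> hX; rewrite !(BDl, BDr, BZl, BZr) (Bsym e x hX); ring.
Qed.

Lemma psd_rank1 v : psd (v *m v^T).
Proof.
split; first by rewrite trmx_mul trmxK.
move=> x; rewrite -/(Bf _ x x) B_rank1 dotC; by rewrite -expr2 sqr_ge0.
Qed.

Lemma F1 X e : psd X -> Bf X e e = 0 -> X *m e = 0.
Proof.
move=> [hX hp] h0.
have hb : forall w, Bf X w e = 0.
  move=> w; apply/eqP/negPn/negP => hb.
  pose a := Bf X w w; pose b := Bf X w e.
  have := hp (w + (- (a + 1) / (2 * b)) *: e).
  rewrite -/(Bf _ _ _) Bexp // h0 mulr0 addr0 -/a -/b.
  have -> : a + 2 * (- (a + 1) / (2 * b)) * b = -1 by field; rewrite ?mulf_neq0.
  by rewrite ler0N1.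
apply/matrixP => i j; rewrite ord1 [RHS]mxE.
have := hb (delta_mx i 0); by rewrite B_dot /dot trmx_delta -rowE [LHS]mxE.
Qed.

Lemma F2 X e : psd X -> 0 < Bf X e e ->
  let y := (Num.sqrt (Bf X e e))^-1 *: (X *m e) in
  [/\ psd (X - y *m y^T), (forall w, X *m w = 0 -> y^T *m w = 0) &
      y *m y^T *m e = X *m e].
Proof.
move=> [hX hp] hpos y.
set al := Bf X e e in hpos y *.
set s := (Num.sqrt al)^-1.
have sq : Num.sqrt al ^+ 2 = al by rewrite sqr_sqrtr // ltW.
have sne : Num.sqrt al != 0 by rewrite sqrtr_eq0 -ltNge.
have hs : s ^+ 2 * al = 1 by rewrite -sq /s; field.
split.
- split; first by rewrite linearB /= trmx_mul trmxK hX.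
  move=> x; rewrite -/(Bf _ x x) BXB B_rank1 (dotC y x) /y dotZr -B_dot.
  set a := Bf X x x; set b := Bf X x e.
  have := hp (x + (- b / al) *: e); rewrite -/(Bf _ _ _) Bexp // -/a -/b -/al => h.
  have ale : al != 0 by rewrite gt_eqF.
  have e1 : al * (a + 2 * (- b / al) * b + (- b / al) ^+ 2 * al) = a * al - b ^+ 2.
    by field.
  have -> : a - s * b * (s * b) = s ^+ 2 * (al * (a + 2 * (- b / al) * b + (- b / al) ^+ 2 * al)).
    rewrite e1; transitivity (s ^+ 2 * al * a - s ^+ 2 * b ^+ 2); first by rewrite hs mul1r; ring.
    by ring.
  by apply: mulr_ge0; [exact: sqr_ge0 | apply: mulr_ge0 => //; exact: ltW].
- move=> w Xw; rewrite /y linearZ /= -scalemxAl trmx_mul hX -mulmxA Xw mulmx0 scaler0 //.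
- rewrite rank1_apply /y dotZl dotC -B_dot -/al scalerA.
  have -> : s * al * s = 1 by rewrite -hs; ring.
  by rewrite scale1r.
Qed.


Lemma decomp X : psd X -> exists s : seq 'cV[R]_n,
  X = \sum_(z <- s) z *m z^T /\
  (forall w, X *m w = 0 -> forall z, z \in s -> z^T *m w = 0).
Proof.
move=> hX.
suff H : forall (m : nat) (X : 'M[R]_n), psd X ->
    (forall j : 'I_n, (m <= j)%N -> X *m (delta_mx j 0 : 'cV[R]_n) = 0) ->
    exists s : seq 'cV[R]_n, X = \sum_(z <- s) z *m z^T /\
    (forall w, X *m w = 0 -> forall z, z \in s -> z^T *m w = 0).
  by apply: (H n X hX) => j; rewrite leqNgt ltn_ord.
elim=> [|m IH] {hX}X hX hz.
  have X0 : X = 0.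
    apply/matrixP => i j; have /(congr1 (fun M : 'cV[R]_n => M i 0)) := hz j (leq0n _).
    by rewrite -colE /= !mxE.
  by exists [::]; rewrite big_nil; split => // w _ z; rewrite in_nil.
have [hm|hm] := ltnP m n; last first.
  apply: IH => // j hj; exfalso.
  by have := leq_trans hm hj; rewrite leqNgt ltn_ord.
pose e := delta_mx (Ordinal hm) 0 : 'cV[R]_n.
have hzm : forall Y : 'M[R]_n,
    (forall j : 'I_n, (m.+1 <= j)%N -> Y *m (delta_mx j 0 : 'cV[R]_n) = 0) -> Y *m e = 0 ->
    forall j : 'I_n, (m <= j)%N -> Y *m (delta_mx j 0 : 'cV[R]_n) = 0.
  move=> Y h1 h2 j hj; case: (eqVneq (val j) m) => hjm.
    by have -> : j = Ordinal hm by apply: val_inj.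
  by apply: h1; rewrite ltn_neqAle eq_sym hjm hj.
have hal : 0 <= Bf X e e by case: hX => _ /(_ e).
case: (eqVneq (Bf X e e) 0) => hal0.
  by apply: IH => //; apply: hzm => //; exact: F1.
have hpos : 0 < Bf X e e by rewrite lt_def hal0 hal.
have [Ha Hb Hc] := F2 hX hpos.
set y := (Num.sqrt _)^-1 *: _ in Ha Hb Hc.
have hX'w : forall w, X *m w = 0 -> (X - y *m y^T) *m w = 0.
  by move=> w Xw; rewrite mulmxBl -mulmxA Hb // mulmx0 Xw subr0.
have hXe : (X - y *m y^T) *m e = 0 by rewrite mulmxBl Hc subrr.
have [s [hs1 hs2]] := IH (X - y *m y^T) Ha (hzm _ (fun j hj => hX'w _ (hz j hj)) hXe).
exists (y :: s); split.
  by rewrite big_cons -hs1 addrC subrK.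
move=> w Xw z; rewrite in_cons => /orP [/eqP -> | zs]; first exact: Hb.
exact: hs2 _ (hX'w _ Xw) _ zs.
Qed.

Lemma scale_rank1 a z : (a *: z) *m (a *: z)^T = (a * a) *: (z *m z^T).
Proof. by rewrite linearZ /= -scalemxAl -scalemxAr scalerA. Qed.

Lemma cone_sum (S : set 'M[R]_n) k (lam : 'I_k -> R) (P : 'I_k -> 'M[R]_n) :
  convex_cone S -> S 0 -> (forall i, S (P i)) -> (forall i, 0 <= lam i) ->
  S (\sum_(i < k) lam i *: P i).
Proof.
move=> hc h0; elim: k lam P => [|k IH] lam P hP hl; first by rewrite big_ord0.
rewrite big_ord_recr /=.
rewrite -[X in S (X + _)]scale1r; apply: hc => //.
  by apply: IH => i; [exact: hP | exact: hl].
Qed.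

End Alg.

Theorem corollary3p5 (R : realType) (n : nat) (K : set 'cV[R]_n) (c : 'cV[R]_n) :
  closed_convex_cone K ->
  ROG [set X : 'M[R]_n | @psd R n X /\ K (X *m c)].
Proof.
move=> [Kcl Kc].
set S := [set X : 'M[R]_n | psd X /\ K (X *m c)].
have Scone : convex_cone S.
  move=> X Y [[hXs hXp] hXK] [[hYs hYp] hYK] a b ha hb; split; [split|].
  - by rewrite linearD !linearZ /= hXs hYs.
  - move=> x; rewrite -/(Bf _ x x) BXlin.
    by apply: addr_ge0; apply: mulr_ge0 => //; [exact: hXp | exact: hYp].
  - by rewrite mulmxDl -!scalemxAl; exact: Kc.
split.
- split => //.
  have -> : S = (\bigcap_(x in setT) [set X : 'M[R]_n | 0 <= Bf X x x]) `&`
     (\bigcap_(ij in setT) [set X : 'M[R]_n | X ij.2 ij.1 - X ij.1 ij.2 = 0]) `&`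
     ((fun X : 'M[R]_n => X *m c) @^-1` K).
    apply/seteqP; split => X.
      move=> [[hs hp] hK]; split; [split|] => //.
        by move=> x _; exact: hp.
      move=> [i j] _ /=; have /(congr1 (fun M : 'M[R]_n => M i j)) := hs; rewrite mxE /= => ->.
      by rewrite subrr.
    move=> [[h1 h2] hK]; split=> //; split.
      apply/matrixP => i j; rewrite mxE; have := h2 (i, j) I => /= /eqP.
      by rewrite subr_eq0 => /eqP.
    by move=> x; exact: h1 x I.
  apply: closedI; first apply: closedI.
  + apply: closed_bigI => x _.
    apply: (@preimage_closed _ _ (fun X : 'M[R]_n => Bf X x x) [set r | 0 <= r]).
      by move=> X _; exact: entry_cont.
    exact: closed_ge.
  + apply: closed_bigI => ij _.
    apply: (@preimage_closed _ _ (fun X : 'M[R]_n => X ij.2 ij.1 - X ij.1 ij.2) [set r | r = 0]).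
      move=> X _; apply: continuousB; exact: coord_continuous.
    exact: closed_eq.
  + apply: preimage_closed => //.
    move=> X _; apply: mx_cont => i j Y.
    have -> : (fun X : 'M[R]_n => (X *m c) i j) = (fun X => (1%:M *m X *m c) i j).
      by apply/funext => Z; rewrite mul1mx.
    exact: entry_cont.
- by move=> X [].
- apply/seteqP; split => X.
  move=> [hXp hXK].
  have hK0 : K 0.
    by have := Kc _ _ hXK hXK 0 0 (lexx 0) (lexx 0); rewrite !scale0r addr0.
  have [y [X' [hXe [hX'p [hX'c hyc]]]]] : exists (y : 'cV[R]_n) (X' : 'M[R]_n), X = y *m y^T + X' /\
      psd X' /\ X' *m c = 0 /\ y *m y^T *m c = X *m c.
    case: (eqVneq (Bf X c c) 0) => h0.
      exists 0, X; rewrite mul0mx add0r mul0mx (F1 hXp h0); split => //.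
    have hpos : 0 < Bf X c c.
      by rewrite lt_def h0 /=; case: hXp => _ /(_ c).
    have [Ha Hb Hc] := F2 hXp hpos.
    set y := (Num.sqrt _)^-1 *: _ in Ha Hb Hc.
    exists y, (X - y *m y^T); split; first by rewrite addrC subrK.
    by split => //; split => //; rewrite mulmxBl Hc subrr.
  have [s [hs1 hs2]] := decomp hX'p.
  pose L := y :: s.
  have hL : X = \sum_(z <- L) z *m z^T by rewrite big_cons -hs1.
  have hLK : forall z, z \in L -> K (z *m z^T *m c).
    move=> z; rewrite in_cons => /orP [/eqP -> | zs]; first by rewrite hyc.
    by rewrite -mulmxA (hs2 c hX'c z zs) mulmx0.
  pose N := size L.
  have hN : (N%:R : R) != 0 by rewrite pnatr_eq0.
  exists N, (fun=> N%:R^-1),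
    (fun i : 'I_N => (Num.sqrt N%:R *: nth 0 L i) *m (Num.sqrt N%:R *: nth 0 L i)^T).
  have sqN : Num.sqrt (N%:R : R) * Num.sqrt N%:R = N%:R.
    by rewrite -expr2 sqr_sqrtr // ler0n.
  split; first by move=> i; rewrite invr_ge0 ler0n.
  split.
    by rewrite sumr_const card_ord -[_ *+ _]mulr_natr mulVf.
  split.
    move=> i; split; last by eexists.
    split; first exact: psd_rank1.
    rewrite scale_rank1 sqN -scalemxAl.
    have := Kc _ _ (hLK _ (mem_nth 0 (ltn_ord i))) (hLK _ (mem_nth 0 (ltn_ord i)))
      N%:R 0 (ler0n _ _) (lexx 0).
    by rewrite scale0r addr0.
  rewrite {1}hL (big_nth 0) big_mkord; apply: eq_bigr => i _.
  by rewrite scale_rank1 sqN scalerA mulVf // scale1r.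
move=> [k [lam [P [hl [hs [hP ->]]]]]].
case: k lam P hl hs hP => [|k] lam P hl hs hP.
  by move: hs; rewrite big_ord0 => /eqP; rewrite eq_sym oner_eq0.
apply: cone_sum => //.
  have [hP0 _] := hP ord0.
  by have := Scone _ _ hP0 hP0 0 0 (lexx 0) (lexx 0); rewrite !scale0r addr0.
by move=> i; have [] := hP i.
Qed.
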